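(* Let $\mathfrak{C}=(U,M,I,N,J)$ be a formal decision context. Then the set of necessary II-decision rules of $\mathfrak{C}$ is $$\overline{\mathfrak{R}}_{II}(\mathfrak{C})=\{(\cup[O]_{S_1},(\cup[O]_{S_1})^{\square_M})\rightarrow(O^{\lozenge_N\square_N},O^{\lozenge_N})\mid O\in\mathrm{Ext}L_O(\mathfrak{C}_M)\}.$$
   Context: Formal context $(U,M,I)$: $U$ and $M$ are finite nonempty sets and $I\subseteq U\times M$. For $O\subseteq U$ and $C\subseteq M$ define: - $O^{\lozenge}=\{a\in M\mid\exists x\in O\,((x,a)\in I)\}$ and $C^{\square}=\{x\in U\mid \forall a\in M\,((x,a)\in I\Rightarrow a\in C)\}$; - $O^{\square}=\{a\in M\mid \forall x\in U\,((x,a)\in I\Rightarrow x\in O)\}$ and $C^{\lozenge}=\{x\in U\mid \exists a\in C\,((x,a)\in I)\}$. An object-oriented concept is a pair $(O,C)$ with $O^\square=C$ (the $\square$ on subsets of $U$) and $C^\lozenge=O$ (the $\lozenge$ on subsets of $M$); the set of these is $L_O$. A property-oriented concept is a pair $(O,C)$ with $O^\lozenge=C$ (the $\lozenge$ on subsets of $U$) and $C^\square=O$ (the $\square$ on subsets of $M$); the set of these is $L_P$. $\mathrm{Ext}$ denotes the set of extents. Standing assumption: contexts are canonical, i.e. for all $x\in U$ and $a\in M$ we have $\{x\}^\uparrow\notin\{\emptyset,M\}$ and $\{a\}^\downarrow\notin\{\emptyset,U\}$, where $\{x\}^\uparrow$ is the set of attributes of $x$ and $\{a\}^\downarrow$ is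 the set of objects having $a$. A formal decision context $\mathfrak{C}=(U,M,I,N,J)$ has conditional context $\mathfrak{C}_M=(U,M,I)$ and decision context $\mathfrak{C}_N=(U,N,J)$, with $M\cap N=\emptyset$. Subscripts $M$ and $N$ indicate the context in which an operator is computed. A II-decision rule is $(O,C)\rightarrow(Y,D)$ with $(O,C)\in L_O(\mathfrak{C}_M)$, $(Y,D)\in L_P(\mathfrak{C}_N)$ and $O\subseteq Y$; the set of these is $\mathfrak{R}_{II}(\mathfrak{C})$. Implication: $(O_1,C_1)\rightarrow(Y_1,D_1)\Rightarrow(O_2,C_2)\rightarrow(Y_2,D_2)$ iff $O_2\subseteq O_1\subseteq Y_1\subseteq Y_2$. A rule $r$ is necessary if there is no $r_1\in\mathfrak{R}_{II}(\mathfrak{C})\setminus\{r\}$ with $r_1\Rightarrow r$. $S_1$ is the equivalence relation on $\mathrm{Ext}L_O(\mathfrak{C}_M)$ given by $(O,Y)\in S_1$ iff $O^{\lozenge_N}=Y^{\lozenge_N}$. $[O]_{S_1}$ is the class of $O$, and $\cup[O]_{S_1}$ is the union of its members. *)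

(* Defs.v *)
From mathcomp Require Import all_boot.
Set Implicit Arguments. Unset Strict Implicit. Unset Printing Implicit Defensive.

Section Ops.
Variables (U A : finType) (R : U -> A -> bool).

Definition diaU (O : {set U}) : {set A} := [set a | [exists x in O, R x a]].
Definition boxA (C : {set A}) : {set U} := [set x | [forall a, R x a ==> (a \in C)]].
Definition boxU (O : {set U}) : {set A} := [set a | [forall x, R x a ==> (x \in O)]].
Definition diaA (C : {set A}) : {set U} := [set x | [exists a in C, R x a]].

Definition is_LO (p : {set U} * {set A}) : bool := (boxU p.1 == p.2) && (diaA p.2 == p.1).
Definition is_LP (p : {set U} * {set A}) : bool := (diaU p.1 == p.2) && (boxA p.2 == p.1).
Definition ExtLO (O : {set U}) : bool := [exists C : {set A}, is_LO (O, C)].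

Definition canonical : Prop :=
  (forall x : U, [set a | R x a] != set0 /\ [set a | R x a] != setT) /\
  (forall a : A, [set x | R x a] != set0 /\ [set x | R x a] != setT).
End Ops.

Section Decision.
Variables (U M N : finType) (I : U -> M -> bool) (J : U -> N -> bool).

(* a rule (O,C) -> (Y,D) *)
Definition rule := (({set U} * {set M}) * ({set U} * {set N}))%type.

Definition is_ruleII (r : rule) : Prop :=
  is_LO I r.1 /\ is_LP J r.2 /\ r.1.1 \subset r.2.1.

Definition rule_implies (r1 r2 : rule) : Prop :=
  r2.1.1 \subset r1.1.1 /\ r1.1.1 \subset r1.2.1 /\ r1.2.1 \subset r2.2.1.

Definition necessaryII (r : rule) : Prop :=
  is_ruleII r /\ ~ (exists r1, is_ruleII r1 /\ r1 <> r /\ rule_implies r1 r).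

Definition S1_union (O : {set U}) : {set U} :=
  \bigcup_(Y : {set U} | ExtLO I Y && (diaU J O == diaU J Y)) Y.
End Decision.

(* Main.v *)
Require Import Defs.
From mathcomp Require Import all_boot.
Set Implicit Arguments. Unset Strict Implicit.

Section Gen.
Variables (U A : finType) (R : U -> A -> bool).

Lemma adjA (C : {set A}) (O : {set U}) :
  (diaA R C \subset O) = (C \subset boxU R O).
Proof.
apply/subsetP/subsetP => H.
- move=> a aC; rewrite inE; apply/forallP => x; apply/implyP => Rxa.
  apply: H; rewrite inE; apply/existsP; exists a; by rewrite aC Rxa.
- move=> x; rewrite inE => /existsP [a /andP [aC Rxa]].
  by have := H a aC; rewrite inE => /forallP /(_ x) /implyP; apply.
Qed.

Lemma adjU (O : {set U}) (D : {set A}) :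
  (diaU R O \subset D) = (O \subset boxA R D).
Proof.
apply/subsetP/subsetP => H.
- move=> x xO; rewrite inE; apply/forallP => a; apply/implyP => Rxa.
  apply: H; rewrite inE; apply/existsP; exists x; by rewrite xO Rxa.
- move=> a; rewrite inE => /existsP [x /andP [xO Rxa]].
  by have := H x xO; rewrite inE => /forallP /(_ a) /implyP; apply.
Qed.

Lemma diaA_mono (C1 C2 : {set A}) : C1 \subset C2 -> diaA R C1 \subset diaA R C2.
Proof. move=> h; rewrite adjA; apply: subset_trans h _; by rewrite -adjA. Qed.
Lemma boxU_mono (O1 O2 : {set U}) : O1 \subset O2 -> boxU R O1 \subset boxU R O2.
Proof. move=> h; rewrite -adjA; apply: subset_trans _ h; by rewrite adjA. Qed.
Lemma diaU_mono (O1 O2 : {set U}) : O1 \subset O2 -> diaU R O1 \subset diaU R O2.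
Proof. move=> h; rewrite adjU; apply: subset_trans h _; by rewrite -adjU. Qed.
Lemma boxA_mono (D1 D2 : {set A}) : D1 \subset D2 -> boxA R D1 \subset boxA R D2.
Proof. move=> h; rewrite -adjU; apply: subset_trans _ h; by rewrite adjU. Qed.

Lemma ExtLOE (O : {set U}) : ExtLO R O = (diaA R (boxU R O) == O).
Proof.
apply/existsP/idP.
- by move=> [C /andP [/eqP <- /eqP]] ->.
- move=> H; exists (boxU R O); by rewrite /is_LO /= eqxx H.
Qed.

Lemma LP_lem (O : {set U}) : is_LP R (boxA R (diaU R O), diaU R O).
Proof.
rewrite /is_LP /= eqxx andbT eqEsubset adjU subxx /=.
by apply: diaU_mono; rewrite -adjU.
Qed.
End Gen.

Section Main.
Variables (U M N : finType) (I : U -> M -> bool) (J : U -> N -> bool).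

Lemma S1_sub (O Y : {set U}) : ExtLO I Y -> diaU J O = diaU J Y -> Y \subset S1_union I J O.
Proof. move=> EY e; apply: bigcup_sup; by rewrite EY e eqxx. Qed.

Lemma S1_ext (O : {set U}) : ExtLO I (S1_union I J O).
Proof.
rewrite ExtLOE eqEsubset adjA subxx /=.
apply/subsetP => x /bigcupP [Y /andP [EY /eqP e] xY].
have EY' := EY; move: EY; rewrite ExtLOE => /eqP EY.
rewrite -EY in xY.
exact: (subsetP (diaA_mono I (boxU_mono I (S1_sub EY' e))) _ xY).
Qed.

Lemma S1_box (O : {set U}) : S1_union I J O \subset boxA J (diaU J O).
Proof.
apply/subsetP => x /bigcupP [Y /andP [_ /eqP e] xY].
have : Y \subset boxA J (diaU J Y) by rewrite -adjU.
by rewrite -e => /subsetP; apply.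
Qed.

Lemma O_S1 (O : {set U}) : ExtLO I O -> O \subset S1_union I J O.
Proof. by move=> E; apply: S1_sub. Qed.

Lemma LO_lem (O : {set U}) : is_LO I (S1_union I J O, boxU I (S1_union I J O)).
Proof. by rewrite /is_LO /= eqxx /= -ExtLOE S1_ext. Qed.

End Main.

Theorem theorem4p3 (U M N : finType) (I : U -> M -> bool) (J : U -> N -> bool) :
  0 < #|U| -> 0 < #|M| -> 0 < #|N| ->
  canonical I -> canonical J ->
  forall r : rule U M N,
    necessaryII I J r <->
    exists O : {set U}, ExtLO I O /\
      r = ((S1_union I J O, boxU I (S1_union I J O)),
           (boxA J (diaU J O), diaU J O)).
Proof.
move=> _ _ _ _ _ r; split.
- case: r => [[O C] [Y D]] [[HLO [HLP Hsub]] Hnec].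
  move: HLO HLP; rewrite /is_LO /is_LP /= => /andP [/eqP eC /eqP eO] /andP [/eqP eD /eqP eY].
  simpl in Hsub.
  have EO : ExtLO I O by rewrite ExtLOE eC eO.
  exists O; split => //.
  pose r1 : rule U M N := ((S1_union I J O, boxU I (S1_union I J O)),
           (boxA J (diaU J O), diaU J O)).
  case: (eqVneq r1 ((O, C), (Y, D))) => [e | ne]; first exact: (esym e).
  exfalso; apply: Hnec; exists r1; split; last split.
  + split; first exact: LO_lem. split; first exact: LP_lem. exact: S1_box.
  + exact/eqP.
  + split; first exact: O_S1. split; first exact: S1_box.
    by rewrite /= -eY -eD; apply: boxA_mono; apply: diaU_mono.
- move=> [O [EO ->]]; split.
  + split; first exact: LO_lem. split; first exact: LP_lem. exact: S1_box.
  + move=> [[[O1 C1] [Y1 D1]] [[HLO [HLP _]] [Hne [h1 [h2 h3]]]]].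
    simpl in h1, h2, h3.
    move: HLO HLP; rewrite /is_LO /is_LP /= => /andP [/eqP eC /eqP eO] /andP [/eqP eD /eqP eY].
    have EO1 : ExtLO I O1 by rewrite ExtLOE eC eO.
    have OO1 : O \subset O1 := subset_trans (O_S1 J EO) h1.
    have eY1 : Y1 = boxA J (diaU J O).
      apply/eqP; rewrite eqEsubset h3 /= -eY -eD.
      apply: boxA_mono; apply: diaU_mono; exact: subset_trans OO1 h2.
    have eD1 : D1 = diaU J O.
      rewrite -eD eY1; by case/andP: (LP_lem J O) => /eqP.
    have eO1 : O1 = S1_union I J O.
      apply/eqP; rewrite eqEsubset h1 andbT; apply: S1_sub => //.
      apply/eqP; rewrite eqEsubset (diaU_mono J OO1) /= adjU -eY1 //.
    apply: Hne; by rewrite -eC eO1 eY1 eD1.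
Qed.
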